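(* Let $I\subseteq \mathrm{Int}(\mathbb{Z})$ be a principal ideal with $I\cap\mathbb{Z}=n\mathbb{Z}$ for some integer $n\neq 0$. Then $I=n\,\mathrm{Int}(\mathbb{Z})$. In particular $n\,\mathrm{Int}(\mathbb{Z})\cap\mathbb{Z}=n\mathbb{Z}$ for every nonzero integer $n$. Moreover, for nonzero integers $n_1,n_2$ we have $n_1\mathrm{Int}(\mathbb{Z})=n_2\mathrm{Int}(\mathbb{Z})$ if and only if $n_1=\pm n_2$.
   Context: $\mathrm{Int}(\mathbb{Z})=\{f\in\mathbb{Q}[X] : f(\mathbb{Z})\subseteq\mathbb{Z}\}$ is the ring of integer-valued polynomials. An ideal $I$ of $\mathrm{Int}(\mathbb{Z})$ is called unitary if $I\cap\mathbb{Z}\neq\{0\}$. *)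

(* Defs.v *)
From HB Require Import structures.
From mathcomp Require Import all_boot all_order all_algebra.
Set Implicit Arguments. Unset Strict Implicit. Unset Printing Implicit Defensive.
Import Order.TTheory GRing.Theory Num.Theory.
Local Open Scope ring_scope.

Definition intValued (f : {poly rat}) : Prop :=
  forall z : int, f.[z%:~R] \is a Num.int.

Definition inPrincipal (g f : {poly rat}) : Prop :=
  exists2 h, intValued h & f = g * h.

Definition cpoly (n : int) : {poly rat} := (n%:~R)%:P.

(* Main.v *)
Require Import Defs.
From HB Require Import structures.
From mathcomp Require Import all_boot all_order all_algebra.
Import Order.TTheory GRing.Theory Num.Theory.
Local Open Scope ring_scope.

Lemma iv_const (c : rat) : intValued c%:P <-> c \is a Num.int.
Proof.
split; first by move=> /(_ 0); rewrite hornerC.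
by move=> hc z; rewrite hornerC.
Qed.

Lemma iv_N h : intValued h -> intValued (- h).
Proof. by move=> H z; rewrite hornerN rpredN. Qed.

Lemma iv_1 : intValued 1.
Proof. by move=> z; rewrite hornerC. Qed.

Lemma dvd_anti (a b : int) : (a %| b)%Z -> (b %| a)%Z -> a = b \/ a = - b.
Proof.
rewrite !dvdzE => h1 h2.
have : (`|a|%N == `|b|%N) by rewrite eqn_dvd h1 h2.
move=> /eqP/(congr1 (fun k : nat => k%:Z)); rewrite !abszE => /eqP.
by rewrite eqr_norm2 => /orP [] /eqP; [left|right].
Qed.

Lemma cpoly_solve (n m : int) h : n != 0 -> cpoly m = cpoly n * h ->
  h = (m%:~R / n%:~R)%:P.
Proof.
move=> nz; rewrite /cpoly mul_polyC => E.
have nzr : (n%:~R : rat) != 0 by rewrite intr_eq0.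
have -> : h = (n%:~R)^-1 *: (n%:~R *: h) by rewrite scalerA mulVf // scale1r.
by rewrite -E -mul_polyC -polyCM mulrC.
Qed.

Lemma int_div (n m : int) : n != 0 ->
  ((m%:~R / n%:~R : rat) \is a Num.int) <-> (n %| m)%Z.
Proof.
move=> nz; have nzr : (n%:~R : rat) != 0 by rewrite intr_eq0.
split.
- move=> /intrP [k Ek]; apply/dvdzP; exists k.
  apply/eqP; rewrite -(eqr_int rat) intrM -Ek mulfVK //.
- move=> /dvdzP [k ->]; rewrite intrM mulfK //; exact: rpred_int.
Qed.

Lemma part2 (n : int) : n != 0 ->
  forall m : int, inPrincipal (cpoly n) (cpoly m) <-> (n %| m)%Z.
Proof.
move=> nz m; split.
- move=> [h hI E]; move: hI; rewrite (cpoly_solve _ _ _ nz E) => /iv_const.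
  by move/(int_div _ m nz).
- move=> D; exists (m%:~R / n%:~R)%:P; first by apply/iv_const/(int_div _ m nz).
  rewrite /cpoly -polyCM mulrC divfK // intr_eq0 //.
Qed.

Lemma negP_ (a : int) f : inPrincipal (cpoly a) f -> inPrincipal (cpoly (- a)) f.
Proof.
move=> [h hI ->]; exists (- h); first exact: iv_N.
by rewrite /cpoly mulrNz polyCN mulrNN.
Qed.

Lemma pm_eq (a b : int) f : a = b \/ a = - b ->
  inPrincipal (cpoly a) f <-> inPrincipal (cpoly b) f.
Proof.
move=> [->|->]; first by [].
split; first by move/negP_; rewrite opprK.
exact: negP_.
Qed.

Theorem mainTheorem1 :
  (forall (g : {poly rat}) (n : int), intValued g -> n != 0 ->
     (forall m : int, inPrincipal g (cpoly m) <-> (n %| m)%Z) ->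
     forall f : {poly rat}, inPrincipal g f <-> inPrincipal (cpoly n) f)
  /\
  (forall n : int, n != 0 ->
     forall m : int, inPrincipal (cpoly n) (cpoly m) <-> (n %| m)%Z)
  /\
  (forall n1 n2 : int, n1 != 0 -> n2 != 0 ->
     ((forall f : {poly rat}, inPrincipal (cpoly n1) f <-> inPrincipal (cpoly n2) f)
      <-> (n1 = n2 \/ n1 = - n2))).
Proof.
split; last split; last first.
- move=> n1 n2 nz1 nz2; split; last by move=> H f; apply: pm_eq.
  move=> H; apply: dvd_anti.
  + apply/(part2 _ nz1)/H; exists 1; [exact: iv_1 | by rewrite mulr1].
  + apply/(part2 _ nz2)/H; exists 1; [exact: iv_1 | by rewrite mulr1].
- exact: part2.
move=> g n gI nz H.
have [h0 h0I E] : inPrincipal g (cpoly n) by apply/H.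
have s1 : size (cpoly n) == 1 by rewrite /cpoly size_polyC intr_eq0 nz.
have sg : size g = 1 by move: (s1); rewrite E size_mul_eq1 => /andP [/eqP].
have Eg : g = (g`_0)%:P by apply: size1_polyC; rewrite sg.
have : g`_0 \is a Num.int by apply/iv_const; rewrite -Eg.
move=> /intrP [k Ek].
have gk : g = cpoly k by rewrite Eg Ek.
have kz : k != 0.
  by apply/eqP => k0; move: s1; rewrite E gk k0 /cpoly mul0r size_poly0.
have d1 : (n %| k)%Z by apply/H; exists 1; [exact: iv_1 | rewrite mulr1].
have d2 : (k %| n)%Z by apply/(part2 _ kz); exists h0; rewrite -?gk.
move=> f; rewrite gk; apply: pm_eq; exact: dvd_anti.
Qed.
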